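(* Let $(c_t)_{t\ge0}$ be a solution to Smoluchowski's equation with multiplicative kernel (in the sense defined in the context) with initial condition $c_0$ satisfying $\langle c_0,m^2\rangle=\sum_{m\ge1}m^2c_0(m)<\infty$. Then $t\mapsto\langle c_t,m^2\rangle$ is bounded in a neighborhood of $0$, i.e. there is $\varepsilon>0$ with $\sup_{t\in[0,\varepsilon]}\sum_{m\ge1}m^2 c_t(m)<\infty$.
   Context: For $f,g:\mathbb{N}\to\mathbb{R}^+$ write $\langle f,g\rangle=\sum_{m\ge1}f(m)g(m)$, and write $m$, $m^2$ for the functions $m\mapsto m$, $m\mapsto m^2$. A family $(c_t(m),m\ge1)_{t\ge0}$ of nonnegative functions, each $t\mapsto c_t(m)$ continuous, is a solution to Smoluchowski's equation with initial condition $c_0\in[0,\infty)^{\mathbb{N}}$ if (i) for every $t\ge0$, $\int_0^t\langle m,c_s\rangle^2\,ds<\infty$, and (ii) for every $t\ge0$ and every $f:\mathbb{N}\to[0,\infty)$ with finite support, \[ \langle c_t,f\rangle-\langle c_0,f\rangle=\frac12\int_0^t\sum_{m,m'\ge1}mm'c_s(m)c_s(m')\big(f(m+m')-f(m)-f(m')\big)\,ds. \] *)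

(* Defs.v *)
From HB Require Import structures.
From mathcomp Require Import all_boot all_order all_algebra.
From mathcomp Require Import all_classical all_reals all_analysis.
Set Implicit Arguments. Unset Strict Implicit. Unset Printing Implicit Defensive.
Import Order.TTheory GRing.Theory Num.Theory numFieldNormedType.Exports.
Local Open Scope classical_set_scope.
Local Open Scope ring_scope.
Local Open Scope ereal_scope.

(* <c, f> = sum_{m >= 1} f(m) c(m), as an extended real (series of
   the partial sums; for nonnegative terms it is the sum in [0, +oo]). *)
Definition pairing {R : realType} (c f : nat -> R) : \bar R :=
  \sum_(1 <= m <oo) ((f m * c m)%R)%:E.

Definition mom1 {R : realType} (c : nat -> R) : \bar R :=
  pairing c (fun m => m%:R).
Definition mom2 {R : realType} (c : nat -> R) : \bar R :=
  pairing c (fun m => (m%:R ^+ 2)%R).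

Definition coag_term {R : realType} (c f : nat -> R) : \bar R :=
  \sum_(1 <= m <oo) \sum_(1 <= m' <oo)
     ((m%:R * m'%:R * c m * c m' * (f (m + m')%N - f m - f m'))%R)%:E.

Definition fin_supp {R : realType} (f : nat -> R) : Prop :=
  exists K : nat, forall m, (K < m)%N -> f m = 0%R.

Definition smol_solution {R : realType} (c : R -> nat -> R) : Prop :=
  (forall t m, (0 <= t)%R -> (0 <= c t m)%R) /\
  (forall m, {within (`[0%R, +oo[ : set R)%classic, continuous (fun t : R => c t m)}) /\
  (forall t, (0 <= t)%R ->
     \int[lebesgue_measure]_(s in `[0%R, t]) (mom1 (c s) * mom1 (c s)) < +oo) /\
  (forall t (f : nat -> R), (0 <= t)%R ->
     (forall m, (0 <= f m)%R) -> fin_supp f ->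
     pairing (c t) f - pairing (c 0%R) f =
       (2^-1)%:E * \int[lebesgue_measure]_(s in `[0%R, t]) coag_term (c s) f).

(* Main.v *)
Require Import Defs.
From HB Require Import structures.
From mathcomp Require Import all_boot all_order all_algebra.
From mathcomp Require Import all_classical all_reals all_analysis.
From mathcomp Require Import ring lra.
Import Order.TTheory GRing.Theory Num.Theory numFieldNormedType.Exports.
Local Open Scope classical_set_scope.
Local Open Scope ring_scope.
Local Open Scope ereal_scope.

Lemma series_le_partial (R : realType) (u : nat -> \bar R) N :
  (1 <= N)%N -> (forall n, (N <= n)%N -> u n <= 0) ->
  \sum_(1 <= i <oo) u i <= \sum_(1 <= i < N) u i.
Proof.
move=> N1 uN.
have key n : (N <= n)%N -> \sum_(1 <= i < n) u i = \sum_(1 <= i < N) u i + \sum_(N <= i < n) u i.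
  by move=> Nn; rewrite -big_cat_nat.
have tl m n : (N <= m)%N -> \sum_(m <= i < n) u i <= 0.
  move=> Nm; have [mn|nm] := leqP m n.
    have := @lee_sum_npos_natr R u xpredT m (fun k kN _ => uN k (leq_trans Nm kN)) m n mn.
    by rewrite [X in _ <= X]big_geq.
  by rewrite big_geq // ltnW.
have ni : nonincreasing_seq (fun n => \sum_(1 <= i < n + N) u i).
  move=> i j ij; rewrite (big_cat_nat _ (n:=i+N)) /=; first by apply: geeDl; apply: tl; rewrite leq_addl.
    by rewrite (leq_trans N1) // leq_addl.
  by rewrite leq_add2r.
have cv : cvgn (fun n => \sum_(1 <= i < n) u i).
  have /cvg_ex[l Hl] := ereal_nonincreasing_is_cvgn ni.
  by apply/cvg_ex; exists l; rewrite -(cvg_shiftn N).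
apply: lime_le => //; exists N => // n /= Nn.
by rewrite key // geeDl // tl.
Qed.

Definition fK {R : realType} (K : nat) : nat -> R :=
  fun m => if (m <= K)%N then (m%:R ^+ 2)%R else 0%R.
Definition uK {R : realType} (K : nat) (cs : nat -> R) : R :=
  (\sum_(1 <= m < K.+1) (m%:R ^+ 2 * cs m))%R.

Lemma fK_ge0 (R : realType) K m : (0 <= @fK R K m)%R.
Proof. by rewrite /fK; case: ifP => // _; exact: sqr_ge0. Qed.

Lemma pairing_fK (R : realType) K (cs : nat -> R) :
  pairing cs (@fK R K) = (uK K cs)%:E.
Proof.
rewrite /pairing; apply: cvg_lim => //; apply: cvg_near_cst; near=> n.
have Kn : (K.+1 <= n)%N by near: n; exists K.+1.
rewrite sumEFin; congr EFin; rewrite /uK (@big_cat_nat _ _ _ K.+1) //=.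
rewrite [X in (_ + X)%R]big_nat_cond [X in (_ + X)%R]big1 ?addr0.
  by apply: eq_big_nat => m /andP[_ mK]; rewrite /fK -ltnS mK.
by move=> m /andP[/andP[Km _] _]; rewrite /fK leqNgt Km mul0r.
Unshelve. all: by end_near. Qed.

Lemma uK_le_mom2 (R : realType) K (cs : nat -> R) : (forall m, 0 <= cs m)%R ->
  (uK K cs)%:E <= mom2 cs.
Proof.
move=> c0; rewrite /mom2 /pairing /uK -sumEFin.
apply: nneseries_lim_ge => n _ _; rewrite lee_fin mulr_ge0 //; exact: sqr_ge0.
Qed.

Lemma mom2_le (R : realType) (cs : nat -> R) (B : R) : (forall m, 0 <= cs m)%R ->
  (0 <= B)%R -> (forall K, uK K cs <= B)%R -> mom2 cs <= B%:E.
Proof.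
move=> c0 B0 HK; rewrite /mom2 /pairing; apply: lime_le.
  by apply: is_cvg_nneseries => n _ _; rewrite lee_fin mulr_ge0 //; exact: sqr_ge0.
apply: nearW => -[|K]; first by rewrite big_geq // lee_fin.
by rewrite sumEFin lee_fin; exact: HK.
Qed.

Lemma coag_bound (R : realType) K (cs : nat -> R) : (forall m, 0 <= cs m)%R ->
  coag_term cs (@fK R K) <= (2 * uK K cs ^+ 2)%:E.
Proof.
move=> c0.
pose a := fun m m' : nat =>
  (m%:R * m'%:R * cs m * cs m' * (fK K (m + m')%N - fK K m - fK K m'))%R.
have pos m m' : (0 <= m%:R * m'%:R * cs m * cs m')%R by rewrite !mulr_ge0.
have fK0 n : (K < n)%N -> @fK R K n = 0%R by move=> Kn; rewrite /fK leqNgt Kn.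
have aK1 m m' : (K < m')%N -> (a m m' <= 0)%R.
  move=> Km'; rewrite /a; apply: mulr_ge0_le0 => //.
  rewrite (fK0 m') // (fK0 (m + m')%N) ?ltn_addl // sub0r subr0 oppr_le0.
  exact: fK_ge0.
have aK2 m m' : (K < m)%N -> (a m m' <= 0)%R.
  move=> Km; rewrite /a; apply: mulr_ge0_le0 => //.
  rewrite (fK0 m) // (fK0 (m + m')%N) ?ltn_addr // subrr sub0r oppr_le0.
  exact: fK_ge0.
have ab m m' : (m <= K)%N -> (m' <= K)%N ->
    (a m m' <= 2 * ((m%:R ^+ 2 * cs m) * (m'%:R ^+ 2 * cs m')))%R.
  move=> mK m'K; case: (leqP (m + m') K) => h.
    have -> : a m m' = (2 * ((m%:R ^+ 2 * cs m) * (m'%:R ^+ 2 * cs m')))%R.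
      by rewrite /a /fK h mK m'K natrD; ring.
    by [].
  apply: (@le_trans _ _ 0%R).
    rewrite /a; apply: mulr_ge0_le0 => //.
    rewrite /fK leqNgt h mK m'K /= sub0r -opprD oppr_le0 addr_ge0 //; exact: sqr_ge0.
  by rewrite !mulr_ge0 // sqr_ge0.
have inner m : \sum_(1 <= m' <oo) (a m m')%:E <= (\sum_(1 <= m' < K.+1) a m m')%:E.
  rewrite -sumEFin; apply: series_le_partial => // m' Km'; rewrite lee_fin; exact: aK1.
rewrite /coag_term.
apply: le_trans (@series_le_partial R _ K.+1 _ _) _ => //.
  move=> m Km; apply: le_trans (@series_le_partial R _ 1 _ _) _ => //.
    by move=> m' _; rewrite lee_fin; exact: aK2.
  by rewrite big_geq.
apply: (@le_trans _ _ (\sum_(1 <= m < K.+1) (\sum_(1 <= m' < K.+1) a m m')%:E)).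
  by apply: lee_sum => m _; exact: inner.
rewrite sumEFin lee_fin.
apply: (@le_trans _ _ (\sum_(1 <= m < K.+1) \sum_(1 <= m' < K.+1)
     (2 * ((m%:R ^+ 2 * cs m) * (m'%:R ^+ 2 * cs m'))))%R).
  apply: ler_sum_nat => m /andP[_ mK]; apply: ler_sum_nat => m' /andP[_ m'K].
  by apply: ab; rewrite -ltnS.
rewrite /uK expr2 le_eqVlt; apply/orP; left; apply/eqP.
rewrite big_distrl mulr_sumr /=; apply: eq_bigr => m _.
by rewrite big_distrr mulr_sumr /=; apply: eq_bigr => m' _.
Qed.
Lemma int_le_nonmeas (R : realType) (D : set R) (f g : R -> \bar R) :
  (forall x, D x -> 0 <= g x) -> (forall x, D x -> f x <= g x) ->
  \int[@lebesgue_measure R]_(x in D) f x <= \int[@lebesgue_measure R]_(x in D) g x.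
Proof.
move=> g0 fg.
rewrite integralE.
apply: (@le_trans _ _ (\int[@lebesgue_measure R]_(x in D) f^\+ x)).
  apply: geeDl; rewrite oppe_le0; apply: integral_ge0 => x _.
  exact: funeneg_ge0.
rewrite [X in X <= _]ge0_integralE; last by move=> x _; exact: funepos_ge0.
rewrite [X in _ <= X]ge0_integralE; last exact: g0.
apply: ereal_sup_le => _ [h Hh <-]; exists h => //= x.
apply: (le_trans (Hh x)); rewrite /patch; case: ifP => // /[!inE] Dx.
by rewrite funeposE ge_max fg //= g0.
Qed.

Lemma int_cst_itv (R : realType) (t r : R) : (0 <= t)%R ->
  \int[@lebesgue_measure R]_(x in `[0%R, t]) (r%:E) = (r * t)%:E.
Proof.
move=> t0; rewrite integral_cst //= lebesgue_measure_itv /= lte_fin.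
case: ltgtP t0 => // [t0|<-] _; first by rewrite sube0.
by rewrite mulr0 mule0.
Qed.

Lemma cvg_sumseq (R : realType) {T} (F : set_system T) {FF : Filter F} (r : seq nat)
  (g : nat -> T -> R) (l : nat -> R) :
  (forall m, g m t @[t --> F] --> l m) ->
  (\sum_(m <- r) g m t)%R @[t --> F] --> (\sum_(m <- r) l m)%R.
Proof.
move=> H; elim: r => [|i r IH].
  under eq_cvg do rewrite big_nil.
  by rewrite big_nil; exact: cvg_cst.
under eq_cvg do rewrite big_cons.
by rewrite big_cons; apply: cvgD => //; exact: H.
Qed.

Lemma uK_cont (R : realType) (c : R -> nat -> R) K :
  (forall m, {within (`[0%R, +oo[ : set R)%classic, continuous (fun t => c t m)}) ->
  forall x e : R, (0 <= x)%R -> (0 < e)%R -> exists2 d : R, (0 < d)%R &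
    forall s, (0 <= s)%R -> (`|x - s| < d)%R -> (`|uK K (c x) - uK K (c s)| < e)%R.
Proof.
move=> Hc x e x0 e0.
have Ax : (`[0%R, +oo[ : set R)%classic x by rewrite /= in_itv /= x0.
have H m : (fun t => (m%:R ^+ 2 * c t m)%R) @ within (`[0%R, +oo[ : set R)%classic (nbhs x) -->
    (m%:R ^+ 2 * c x m)%R.
  apply: cvgM; first exact: cvg_cst.
  by have /subspace_continuousP := Hc m; apply.
have := cvg_sumseq R _ (index_iota 1 K.+1) _ _ H.
move=> /(_ (within_filter _ _)).
move=> HH; have := @cvgr_dist_lt _ _ _ _ _ _ _ HH e e0; rewrite near_withinE.
move=> /(_ (within_filter _ _)).
case/(nbhs_ballP _ _) => d d0 Hd; exists d => // s s0 xs.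
apply: (Hd s); last by rewrite /= in_itv /= s0.
by rewrite -ball_normE.
Qed.

Lemma boot (R : realType) (u : R -> R) (A eps : R) : (0 < A)%R ->
  (u 0 <= A)%R ->
  (forall x e : R, (0 <= x)%R -> (0 < e)%R -> exists2 d : R, (0 < d)%R &
    forall s, (0 <= s)%R -> (`|x - s| < d)%R -> (`|u x - u s| < e)%R) ->
  (forall t, (0 <= t <= eps)%R -> (forall s, (0 <= s <= t)%R -> (u s <= 2 * A)%R) ->
     (u t * 2 <= 3 * A)%R) ->
  forall t, (0 <= t <= eps)%R -> (u t <= 2 * A)%R.
Proof.
move=> A0 u0 cont H t1 /andP[t10 t1e].
rewrite leNgt; apply/negP => ut1.
pose E := [set t : R | (0 <= t <= t1)%R /\ (2 * A < u t)%R].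
have Et1 : E t1 by split => //; rewrite t10 lexx.
have Elb : has_lbound E by exists 0%R => y [/andP[]].
have tau0 : (0 <= inf E)%R.
  by apply: lb_le_inf; [exists t1 | move=> y [/andP[]]].
have taut1 : (inf E <= t1)%R by apply: ge_inf.
set tau := inf E in tau0 taut1.
have below s : (0 <= s)%R -> (s < tau)%R -> (u s * 2 <= 3 * A)%R.
  move=> s0 stau; apply: H.
    by rewrite s0 /= (le_trans (ltW stau)) // (le_trans taut1).
  move=> s' /andP[s'0 s's]; rewrite leNgt; apply/negP => us'.
  have Es' : E s'.
    by split => //; rewrite s'0 /= (le_trans s's) // (le_trans (ltW stau)).
  have := ge_inf Elb Es'; rewrite -/tau => taus'.
  by have := lt_le_trans (le_lt_trans taus' (le_lt_trans s's stau)) (lexx tau); rewrite ltxx.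
have A4 : (0 < A / 4)%R by rewrite divr_gt0.
have [d d0 Hd] := cont tau (A / 4)%R tau0 A4.
have utau : (u tau * 4 < 7 * A)%R.
  have [tau_eq|tau_pos] := eqVneq tau 0%R.
    by rewrite tau_eq; lra.
  have tau_gt : (0 < tau)%R by rewrite lt_def tau_pos tau0.
  pose m := Order.min tau d.
  have hm1 : (m <= tau)%R by rewrite /m ge_min lexx.
  have hm2 : (m <= d)%R by rewrite /m ge_min lexx orbT.
  have hm0 : (0 < m)%R by rewrite /m lt_min tau_gt d0.
  have s0 : (0 <= tau - m / 2)%R by lra.
  have := below (tau - m / 2)%R s0 ltac:(lra).
  have := Hd (tau - m / 2)%R s0.
  rewrite (_ : tau - (tau - m / 2) = m / 2)%R; last by lra.
  rewrite ger0_norm; last by lra.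
  move=> /(_ ltac:(lra)); rewrite ltr_norml => /andP[h1 h2] h3; lra.
have hinf : has_inf E by split => //; exists t1.
have [e Ee etau] := inf_adherent d0 hinf.
rewrite -/tau in etau.
have taue := ge_inf Elb Ee; rewrite -/tau in taue.
case: Ee => /andP[e0 _] ue.
have := Hd e e0; rewrite ler0_norm; last by lra.
move=> /(_ ltac:(lra)); rewrite ltr_norml => /andP[h1 h2]; lra.
Qed.

Theorem lemma2p3 (R : realType) (c : R -> nat -> R) :
  smol_solution c ->
  mom2 (c 0%R) < +oo ->
  exists2 eps : R, (0 < eps)%R &
    exists M : R, forall t : R, (0 <= t <= eps)%R -> mom2 (c t) <= M%:E.
Proof.
move=> [cpos [ccont [_ ceq]]] hmom.
have c0pos m : (0 <= c 0%R m)%R by apply: cpos.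
have m0 : 0 <= mom2 (c 0%R).
  by apply: nneseries_ge0 => n _ _; rewrite lee_fin mulr_ge0 // sqr_ge0.
have mfin : mom2 (c 0%R) = (fine (mom2 (c 0%R)))%:E.
  by rewrite fineK // ge0_fin_numE.
have f0 : (0 <= fine (mom2 (c 0%R)))%R by apply: fine_ge0.
set A := (fine (mom2 (c 0%R)) + 1)%R.
have A0 : (0 < A)%R by rewrite /A; lra.
have eps0 : (0 < 1 / (8 * A))%R by rewrite divr_gt0 // mulr_gt0.
exists (1 / (8 * A))%R => //; exists (2 * A)%R => t ht.
have t0 : (0 <= t)%R by case/andP: ht.
apply: mom2_le; [by move=> m; apply: cpos | lra | move=> K].
have uKge0 s : (0 <= s)%R -> (0 <= uK K (c s))%R.
  move=> s0; rewrite /uK; apply: sumr_ge0 => m _; rewrite mulr_ge0 ?sqr_ge0 //.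
  exact: cpos.
apply: (@boot R (fun s => uK K (c s)) A (1 / (8 * A))%R) => //.
- have := uK_le_mom2 R K (c 0%R) c0pos; rewrite mfin lee_fin /A; lra.
- exact: uK_cont.
move=> s /andP[s0 se] hb.
have hs8 : (s * (8 * A) <= 1)%R by rewrite -ler_pdivlMr // mulr_gt0.
have fs : fin_supp (@fK R K).
  by exists K => m Km; rewrite /fK leqNgt Km.
have := ceq s (@fK R K) s0 (@fK_ge0 R K) fs.
rewrite !pairing_fK -EFinB => eq.
have hint : \int[lebesgue_measure]_(r in `[0%R, s]) coag_term (c r) (@fK R K)
    <= (8 * A ^+ 2 * s)%:E.
  rewrite -int_cst_itv //; apply: int_le_nonmeas.
    by move=> x _; rewrite lee_fin; nra.
  move=> r; rewrite /= in_itv /= => /andP[r0 rs].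
  apply: le_trans (coag_bound R K (c r) _) _; first by move=> m; apply: cpos.
  rewrite lee_fin.
  have h1 := hb r ltac:(by rewrite r0 rs).
  have h2 := uKge0 r r0.
  nra.
have : (uK K (c s) - uK K (c 0%R))%:E <= (2^-1 * (8 * A ^+ 2 * s))%:E.
  by rewrite eq EFinM; apply: lee_wpmul2l => //; rewrite lee_fin invr_ge0.
rewrite lee_fin => h.
have := uK_le_mom2 R K (c 0%R) c0pos; rewrite mfin lee_fin => h0.
rewrite /A in A0 hs8 h *; nra.
Qed.
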